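(* Let $r\ge1$, $n$ be integers and let $\sigma,\sigma':\mathbb{Z}_n\to\{0,1\}$ be a temporally periodic pair, with block-length vectors $\vec v$ and $\vec v'$ respectively. Then $|\vec v|=|\vec v'|$, i.e. $|B(\sigma)|=|B(\sigma')|$.
   Context: Cells are elements of $\mathbb{Z}_n$, arithmetic mod $n$; $[a,b]$ denotes the cyclic interval $a,\dots,b$. The majority rule with radius $r$: $\mathrm{maj}_r(\sigma)(i)=0$ if among the cells of $[i-r,i+r]$ strictly more have value $0$ than $1$ under $\sigma$, and $=1$ otherwise. A temporally periodic pair is a pair with $\mathrm{maj}_r(\sigma)=\sigma'$ and $\mathrm{maj}_r(\sigma')=\sigma$. For $\beta\in\{0,1\}$, $B^\beta(\sigma)$ is the set of cell intervals $[i,j]$ with $\sigma(k)=\beta$ for all $k\in[i,j]$ and $\sigma(i-1)=\sigma(j+1)=1-\beta$; $B(\sigma)=B^0(\sigma)\cup B^1(\sigma)$. The block-length vector of $\sigma$ is the cyclic sequence of lengths of the blocks in $B(\sigma)$ listed in their cyclic order; its length $|\vec v|$ is the number of entries, $|B(\sigma)|$. *)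

(* Defs.v *)
From mathcomp Require Import all_boot all_order all_algebra.
Set Implicit Arguments. Unset Strict Implicit. Unset Printing Implicit Defensive.
Import Order.TTheory GRing.Theory Num.Theory.
Local Open Scope ring_scope.

(* Cells are 'I_n, read as Z_n; a configuration is sigma : 'I_n -> bool
   (false = 0, true = 1).  [cellv sigma k] is the value of the cell k mod n,
   for an integer k (needs 0 < n to be meaningful). *)
Definition cellv (n : nat) (sigma : 'I_n -> bool) (k : int) : bool :=
  if insub (absz (k %% n%:Z)%Z) is Some j then sigma j else false.

Definition window_count (n r : nat) (sigma : 'I_n -> bool) (i : 'I_n) (b : bool) : nat :=
  (\sum_(0 <= t < (2 * r).+1) ((cellv sigma (i%:Z + t%:Z - r%:Z)) == b))%N.

Definition maj (n r : nat) (sigma : 'I_n -> bool) : 'I_n -> bool :=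
  fun i => ~~ (window_count r sigma i true < window_count r sigma i false)%N.

Definition temporally_periodic_pair (n r : nat) (sigma sigma' : 'I_n -> bool) : Prop :=
  (forall i, maj r sigma i = sigma' i) /\ (forall i, maj r sigma' i = sigma i).

Definition is_block (n : nat) (sigma : 'I_n -> bool) (beta : bool) (i j : 'I_n) : bool :=
  [forall t : 'I_n, (t <= absz ((j%:Z - i%:Z) %% n%:Z)%Z)%N ==> (cellv sigma (i%:Z + t%:Z) == beta)]
  && (cellv sigma (i%:Z - 1) == ~~ beta) && (cellv sigma (j%:Z + 1) == ~~ beta).

(* B^beta(sigma) and B(sigma) = B^0(sigma) u B^1(sigma), intervals as (start, end) pairs *)
Definition Bbeta (n : nat) (sigma : 'I_n -> bool) (beta : bool) : {set 'I_n * 'I_n} :=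
  [set p | is_block sigma beta p.1 p.2].

Definition B (n : nat) (sigma : 'I_n -> bool) : {set 'I_n * 'I_n} :=
  Bbeta sigma false :|: Bbeta sigma true.

(* Main.v *)
Require Import Defs.
From mathcomp Require Import all_boot all_order all_algebra.
From mathcomp Require Import zify.
Import Order.TTheory GRing.Theory Num.Theory.

Set Implicit Arguments. Unset Strict Implicit.
Section Aux.
Local Open Scope ring_scope.

Lemma cellv_mod n (s : 'I_n -> bool) k : cellv s ((k %% n%:Z)%Z) = cellv s k.
Proof. by rewrite /cellv modz_mod. Qed.

Lemma cellv_per n (s : 'I_n -> bool) k : cellv s (k + n%:Z) = cellv s k.
Proof. by rewrite /cellv modzDr. Qed.

Lemma cellv_perN n (s : 'I_n -> bool) k : cellv s (k - n%:Z) = cellv s k.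
Proof. by rewrite -(cellv_per s (k - n%:Z)) subrK. Qed.

Lemma cellv_ext n (s t : 'I_n -> bool) : s =1 t -> forall k, cellv s k = cellv t k.
Proof. by move=> h k; rewrite /cellv; case: insub. Qed.

Lemma cellv_ord n (s : 'I_n -> bool) (i : 'I_n) : cellv s (i%:Z) = s i.
Proof.
have hn : (0 < n)%N by apply: (leq_ltn_trans _ (ltn_ord i)).
rewrite /cellv modz_small; last by apply/andP; split => //; rewrite ltz_nat.
case: insubP => [j _ hj|]; last by rewrite /= ltn_ord.
by congr s; apply: val_inj.
Qed.

Lemma modn_ge0 n (hn : (0 < n)%N) (k : int) : 0 <= (k %% n%:Z)%Z.
Proof. by apply: modz_ge0; rewrite eqz_nat -lt0n. Qed.

Lemma abs_mod n (hn : (0 < n)%N) (k : int) : (absz (k %% n%:Z)%Z)%:Z = (k %% n%:Z)%Z.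
Proof. by rewrite gez0_abs // modn_ge0. Qed.

Lemma abs_mod_lt n (hn : (0 < n)%N) (k : int) : (absz (k %% n%:Z)%Z < n)%N.
Proof. by rewrite -ltz_nat abs_mod // ltz_pmod // ltz_nat. Qed.

Definition ordz n (hn : (0 < n)%N) (k : int) : 'I_n := Ordinal (abs_mod_lt hn k).

Lemma ordzE n (hn : (0 < n)%N) (k : int) : (ordz hn k)%:Z = (k %% n%:Z)%Z.
Proof. exact: abs_mod. Qed.

Lemma cellv_ordz n (hn : (0 < n)%N) (s : 'I_n -> bool) k : cellv s k = s (ordz hn k).
Proof. by rewrite -cellv_ord ordzE cellv_mod. Qed.

Lemma cellv_cong n (s : 'I_n -> bool) a b :
  (a %% n%:Z)%Z = (b %% n%:Z)%Z -> cellv s a = cellv s b.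
Proof. by move=> h; rewrite -cellv_mod h cellv_mod. Qed.

End Aux.

Section Sums.

Lemma shift1 n (hn : (0 < n)%N) (g : int -> nat) (hg : forall k, g (k + (Posz n))%R = g k) :
  \sum_(0 <= k < n) g ((Posz k) + 1)%R = \sum_(0 <= k < n) g (Posz k).
Proof.
case: n hn hg => // m _ hg.
rewrite big_nat_recr // big_nat_recl //=.
have -> : g ((Posz m) + 1)%R = g 0%R by rewrite -(hg 0%R); congr g; lia.
rewrite addnC; congr (_ + _); apply: eq_bigr => k _; congr g; lia.
Qed.

Lemma shiftm n (hn : (0 < n)%N) m : forall (g : int -> nat) (hg : forall k, g (k + (Posz n))%R = g k),
  \sum_(0 <= k < n) g ((Posz k) + (Posz m))%R = \sum_(0 <= k < n) g (Posz k).
Proof.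
elim: m => [|m IH] g hg.
  by apply: eq_bigr => k _; rewrite GRing.addr0.
rewrite -(IH g hg) -(shift1 hn (g := fun j => g (j + (Posz m))%R)).
  by apply: eq_bigr => k _; congr g; lia.
by move=> k; rewrite -[in RHS]hg; congr g; lia.
Qed.

Lemma tele n (hn : (0 < n)%N) (y w : int -> bool)
  (hy : forall k, y (k + (Posz n))%R = y k) (hw : forall k, w (k + (Posz n))%R = w k)
  (H : forall k, y k != y (k + 1)%R -> w k = y (k + 1)%R) :
  \sum_(0 <= k < n) (y (Posz k) != y ((Posz k) + 1)%R) <= \sum_(0 <= k < n) (w (Posz k) != w ((Posz k) + 1)%R).
Proof.
pose p k := nat_of_bool (y (k + 1)%R != w k).
have e1 : \sum_(0 <= k < n) (y (Posz k) != y ((Posz k) + 1)%R) =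
          \sum_(0 <= k < n) (y ((Posz k) + 1)%R != y ((Posz k) + 1 + 1)%R).
  rewrite (shift1 hn (g := fun k => nat_of_bool (y k != y (k + 1)%R))) //.
  by move=> k; rewrite hy -[in RHS](hy (k+1)%R); congr (y _ != y _); lia.
have e2 : \sum_(0 <= k < n) p ((Posz k) + 1)%R = \sum_(0 <= k < n) p (Posz k).
  rewrite (shift1 hn (g := p)) // => k; rewrite /p hw -[in RHS](hy (k+1)%R).
  by congr (y _ != _); lia.
rewrite e1 -(leq_add2r (\sum_(0 <= k < n) p (Posz k))) -[X in (_ + X <= _)%N]e2 -!big_split /=.
apply: leq_sum => k _; rewrite /p; have := H ((Posz k) + 1)%R.
case: (y ((Posz k) + 1)%R); case: (y ((Posz k) + 1 + 1)%R); case: (w (Posz k)); case: (w ((Posz k) + 1)%R) => //=; by move/(_ isT).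
Qed.

End Sums.

Section Maj.
Local Open Scope ring_scope.

Definition W n r (s : 'I_n -> bool) (k : int) (b : bool) : nat :=
  (\sum_(0 <= t < (2 * r).+1) ((cellv s (k + t%:Z - r%:Z)) == b))%N.

Lemma cellv_maj n r (hn : (0 < n)%N) (s : 'I_n -> bool) k :
  cellv (maj r s) k = ~~ (W r s k true < W r s k false)%N.
Proof.
have e : forall (a : int) (t : nat), a + t%:Z - r%:Z = a + (t%:Z - r%:Z) by move=> a t; rewrite addrA.
rewrite (cellv_ordz hn) /maj /window_count /W.
congr (~~ (_ < _)%N); apply: eq_bigr => t _; congr (_ == _); apply: cellv_cong;
  rewrite ordzE !e; exact: modzDml.
Qed.

Lemma W_sum n r (s : 'I_n -> bool) k : (W r s k true + W r s k false)%N = (2 * r).+1.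
Proof.
rewrite /W -big_split /=.
transitivity (\sum_(0 <= t < (2 * r).+1) 1)%N.
  by apply: eq_bigr => t _; case: (cellv _ _).
by rewrite sum_nat_const_nat muln1 subn0.
Qed.

Lemma W_step n r (s : 'I_n -> bool) k b :
  (W r s (k + 1) b + (cellv s (k - r%:Z) == b))%N = (W r s k b + (cellv s (k + r%:Z + 1) == b))%N.
Proof.
rewrite /W.
set F := fun t : nat => nat_of_bool (cellv s (k + t%:Z - r%:Z) == b).
have A : (\sum_(0 <= t < (2 * r).+2) F t = F 0%N + \sum_(0 <= t < (2 * r).+1) F t.+1)%N.
  exact: big_nat_recl.
have B : (\sum_(0 <= t < (2 * r).+2) F t = \sum_(0 <= t < (2 * r).+1) F t + F (2 * r).+1)%N.
  exact: big_nat_recr.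
have C : (\sum_(0 <= t < (2 * r).+1) ((cellv s (k + 1 + t%:Z - r%:Z)) == b) = \sum_(0 <= t < (2 * r).+1) F t.+1)%N.
  by apply: eq_bigr => t _; rewrite /F; congr (nat_of_bool (cellv s _ == b)); lia.
have D : F 0%N = (cellv s (k - r%:Z) == b) by rewrite /F; congr (nat_of_bool (cellv s _ == b)); lia.
have E : F (2 * r).+1 = (cellv s (k + r%:Z + 1) == b) by rewrite /F; congr (nat_of_bool (cellv s _ == b)); lia.
have G : (\sum_(0 <= t < (2 * r).+1) ((cellv s (k + t%:Z - r%:Z)) == b) = \sum_(0 <= t < (2 * r).+1) F t)%N by [].
rewrite C -D -E G; lia.
Qed.

Lemma maj_bd n r (hn : (0 < n)%N) (s s' : 'I_n -> bool) (h : forall i, maj r s i = s' i) k :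
  cellv s' k != cellv s' (k + 1) -> cellv s' (k + 1) = cellv s (k + r%:Z + 1).
Proof.
rewrite -!(cellv_ext h) !cellv_maj //.
have S0 := W_sum r s k; have S1 := W_sum r s (k + 1).
have T0 := W_step r s k true; have T1 := W_step r s k false.
move: S0 S1 T0 T1.
set a := W r s k true; set b := W r s k false; set c := W r s (k + 1) true; set d := W r s (k+1) false.
clearbody a b c d.
case: (cellv s (k - r%:Z)); case: (cellv s (k + r%:Z + 1)) => /= S0 S1 T0 T1;
  case: ltnP => h1; case: ltnP => h2 //= _; exfalso; lia.
Qed.

End Maj.

Section Blocks.
Local Open Scope ring_scope.

Lemma e_spec n (i j : 'I_n) :
  (absz ((j%:Z - i%:Z) %% n%:Z)%Z < n)%N /\
  (((i <= j)%N /\ (absz ((j%:Z - i%:Z) %% n%:Z)%Z)%:Z = j%:Z - i%:Z) \/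
   ((j < i)%N /\ (absz ((j%:Z - i%:Z) %% n%:Z)%Z)%:Z = j%:Z - i%:Z + n%:Z)).
Proof.
have hn : (0 < n)%N by apply: (leq_ltn_trans _ (ltn_ord i)).
split; first exact: abs_mod_lt.
rewrite abs_mod //; case: (leqP i j) => h; [left|right]; split => //.
  by rewrite modz_small //; have := ltn_ord j; have := ltn_ord i; lia.
by rewrite -modzDr modz_small //; have := ltn_ord j; have := ltn_ord i; lia.
Qed.

Lemma X_eq n (s : 'I_n -> bool) (a b : int) :
  a = b \/ a = b + n%:Z \/ a = b - n%:Z -> cellv s a = cellv s b.
Proof. by case=> [->|[->|->]]; rewrite ?cellv_per ?cellv_perN. Qed.

End Blocks.

Section Blocks2.
Local Open Scope ring_scope.

Lemma block_end n (s : 'I_n -> bool) b (i j : 'I_n) :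
  is_block s b i j -> cellv s j%:Z = b /\ cellv s (j%:Z + 1) = ~~ b.
Proof.
case/andP => [/andP [/forallP H1 _] /eqP H3]; split => //.
have [he hc] := e_spec i j.
have := H1 (Ordinal he); rewrite leqnn /= => /eqP <-.
apply: X_eq; case: hc => [[_ E]|[_ E]]; lia.
Qed.

Lemma block_lt n (s : 'I_n -> bool) b (i i' j : 'I_n) :
  is_block s b i j -> is_block s b i' j ->
  ~ (absz ((j%:Z - i%:Z) %% n%:Z)%Z < absz ((j%:Z - i'%:Z) %% n%:Z)%Z)%N.
Proof.
move=> Hb Hb' hlt.
case/andP: Hb => [/andP [_ /eqP H2] _].
case/andP: Hb' => [/andP [/forallP H1 _] _].
have [he hc] := e_spec i j; have [he' hc'] := e_spec i' j.
move: hlt he hc he' hc' H1.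
set e := absz ((j%:Z - i%:Z) %% n%:Z)%Z; set e' := absz ((j%:Z - i'%:Z) %% n%:Z)%Z.
move=> hlt he hc he' hc' H1.
have ht : (e' - e - 1 < n)%N by lia.
have := H1 (Ordinal ht) => /= /implyP /(_ (leq_trans (leq_subr _ _) (leq_subr _ _))) /eqP.
have E0 : cellv s (i'%:Z + (e' - e - 1)%N%:Z) = cellv s (i%:Z - 1).
  by apply: X_eq; case: hc => [[_ E]|[_ E]]; case: hc' => [[_ E']|[_ E']]; lia.
by rewrite E0 H2; case: (b).
Qed.

End Blocks2.

Section Blocks3.
Local Open Scope ring_scope.

Lemma negb_ne (x y : bool) : x != y -> x == ~~ y.
Proof. by case: x; case: y. Qed.

Lemma block_inj n (s : 'I_n -> bool) b b' (i i' j : 'I_n) :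
  is_block s b i j -> is_block s b' i' j -> i = i'.
Proof.
move=> Hb Hb'.
have [E1 _] := block_end Hb; have [E2 _] := block_end Hb'.
have ebb : b' = b by rewrite -E1 -E2.
rewrite {}ebb in Hb'.
have L1 := block_lt Hb Hb'; have L2 := block_lt Hb' Hb.
have [he hc] := e_spec i j; have [he' hc'] := e_spec i' j.
move: L1 L2 he hc he' hc'.
set e := absz ((j%:Z - i%:Z) %% n%:Z)%Z; set e' := absz ((j%:Z - i'%:Z) %% n%:Z)%Z.
move=> L1 L2 he hc he' hc'.
have ee : e = e' by case: (ltngtP e e') => h; first [exact: (False_ind _ (L1 h)) | exact: (False_ind _ (L2 h)) | done].
apply: val_inj => /=.
have := ltn_ord i; have := ltn_ord i'; have := ltn_ord j.
case: hc => [[_ E]|[_ E]]; case: hc' => [[_ E']|[_ E']]; lia.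
Qed.

Lemma block_exists n (s : 'I_n -> bool) (j : 'I_n) :
  cellv s j%:Z != cellv s (j%:Z + 1) -> exists i : 'I_n, is_block s (cellv s j%:Z) i j.
Proof.
move=> hj.
have hn : (0 < n)%N by apply: (leq_ltn_trans _ (ltn_ord j)).
set b := cellv s j%:Z in hj *.
pose P := fun d : nat => cellv s (j%:Z - d%:Z) != b.
have Pn : P n.-1.
  have E : cellv s (j%:Z - (n.-1)%:Z) = cellv s (j%:Z + 1) by apply: X_eq; lia.
  by rewrite /P E eq_sym.
have exP : exists d, P d by exists n.-1.
case: (ex_minnP exP) => d Pd dmin.
have d1 : (0 < d)%N.
  case: d Pd dmin => // Pd _.
  have E : cellv s (j%:Z - 0%:Z) = b by apply: X_eq; lia.
  by move: Pd; rewrite /P E eqxx.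
have dn : (d <= n.-1)%N := dmin _ Pn.
pose i0 := if (d <= j.+1)%N then (j.+1 - d)%N else (j.+1 + n - d)%N.
have hi0 : (i0 < n)%N by rewrite /i0; have := ltn_ord j; case: ifP; lia.
have Hi : (i0%:Z = j%:Z + 1 - d%:Z) \/ (i0%:Z = j%:Z + 1 - d%:Z + n%:Z).
  by rewrite /i0; have := ltn_ord j; case: ifP; lia.
exists (Ordinal hi0).
apply/andP; split; [apply/andP; split|].
- apply/forallP => t; apply/implyP => /= ht.
  have [he hc] := e_spec (Ordinal hi0) j.
  move: ht he hc => /=.
  set e := absz _ => ht he hc.
  have nP : ~~ P (d - 1 - t)%N.
    apply/negP => hp; have := dmin _ hp; have := ltn_ord j; have := ltn_ord t;
      case: hc => [[_ E]|[_ E]]; lia.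
  rewrite /P negbK in nP.
  rewrite -(eqP nP); apply/eqP; apply: X_eq.
  have := ltn_ord j; have := ltn_ord t; case: hc => [[_ E]|[_ E]]; lia.
- apply: negb_ne; rewrite /= (_ : cellv s (i0%:Z - 1) = cellv s (j%:Z - d%:Z)) //.
  by apply: X_eq; have := ltn_ord j; lia.
- by apply: negb_ne; rewrite eq_sym.
Qed.

Definition D n (s : 'I_n -> bool) := (\sum_(0 <= k < n) (cellv s k%:Z != cellv s (k%:Z + 1)))%N.

Lemma card_B n (s : 'I_n -> bool) : #|B s| = D s.
Proof.
have -> : D s = #|[set j : 'I_n | cellv s j%:Z != cellv s (j%:Z + 1)]|.
  rewrite /D big_mkord -sum1_card [in RHS]big_mkcond /=; apply: eq_bigr => j _.
  by rewrite inE; case: (_ != _).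
rewrite -(@card_in_imset _ _ snd (B s)).
  apply: eq_card => j; rewrite inE; apply/imsetP/idP.
    case=> [[i j'] hp ->] /=; rewrite !inE in hp.
    by case/orP: hp => /block_end [-> ->].
  move=> hj; have [i hb] := block_exists hj; exists (i, j) => //.
  by rewrite !inE /=; move: hb; case: (cellv s j%:Z) => ->; rewrite ?orbT.
move=> [i j] [i' j'] hp hq /= ejj; subst j'.
rewrite !inE /= in hp hq; congr pair.
by case/orP: hp => hp; case/orP: hq => hq; exact: block_inj hp hq.
Qed.

End Blocks3.

Section Main.
Local Open Scope ring_scope.

Lemma D_dec n r (hn : (0 < n)%N) (s s' : 'I_n -> bool) (h : forall i, maj r s i = s' i) :
  (D s' <= D s)%N.
Proof.
have T := @tele n hn (cellv s') (fun k => cellv s (k + r%:Z + 1)) (cellv_per s').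
have T' : (D s' <= \sum_(0 <= k < n) (cellv s (k%:Z + r%:Z + 1) != cellv s (k%:Z + 1 + r%:Z + 1)))%N.
  apply: T => [k|k hk]; first by apply: X_eq; lia.
  exact: esym (maj_bd hn h hk).
apply: (leq_trans T'); rewrite /D.
rewrite -(shiftm hn r.+1 (g := fun k => nat_of_bool (cellv s k != cellv s (k + 1)))).
  by rewrite leq_eqVlt; apply/orP; left; apply/eqP; apply: eq_bigr => k _; congr (nat_of_bool (cellv s _ != cellv s _)); lia.
by move=> k; rewrite cellv_per (_ : k + n%:Z + 1 = k + 1 + n%:Z) ?cellv_per //; lia.
Qed.

End Main.

Unset Implicit Arguments.

Theorem claim16 (r n : nat) (hr : (1 <= r)%N) (hn : (0 < n)%N)
  (sigma sigma' : 'I_n -> bool) :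
  temporally_periodic_pair r sigma sigma' ->
  #|B sigma| = #|B sigma'|.
Proof.
case=> h1 h2; rewrite !card_B; apply/eqP; rewrite eqn_leq.
by rewrite (D_dec hn h1) (D_dec hn h2).
Qed.
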